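(* Let $\mathbf{F}$ and $\mathbf{E}$ be normed spaces of functions over a set $X$ and let $T:\mathbf{F}\to\mathbf{E}$ be a bounded linear operator. The following are equivalent: (i) there is $\omega:X\to\mathbb{C}$ such that $Tf=\omega f$ for all $f\in\mathbf{F}$; (ii) $T\mathbf{F}_Y\subset\mathbf{E}_Y$ for every $Y\subset X$; (iii) $T\mathbf{F}_{X\setminus\{x\}}\subset\mathbf{E}_{X\setminus\{x\}}$ for every $x\in X$; (iv) $T^*x_{\mathbf{E}}\in\mathbb{C}x_{\mathbf{F}}$ for every $x\in X$.
   Context: A normed space of functions (NSF) over a set $X$ is a linear subspace of the space of all functions $X\to\mathbb{C}$ with a norm for which every point evaluation $x_{\mathbf{F}}:f\mapsto f(x)$ is a bounded functional. For $Y\subset X$, $\mathbf{F}_Y=\{f\in\mathbf{F}:\ f(x)=0\text{ for all }x\in X\setminus Y\}$. *)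

(* Defs.v *)
From Stdlib Require Import Reals.
From Coquelicot Require Export Coquelicot.
Export Complex.
Set Implicit Arguments.

(* A normed space of functions (NSF) over a set X: a linear subspace [nsf_mem]
   of the space of all functions X -> C, with a norm [nsf_norm] (meaningful on
   members), such that every point evaluation f |-> f x is bounded. *)
Record NSF (X : Type) := {
  nsf_mem : (X -> C) -> Prop;
  nsf_norm : (X -> C) -> R;
  nsf_mem0 : nsf_mem (fun _ => RtoC 0);
  nsf_memD : forall f g, nsf_mem f -> nsf_mem g -> nsf_mem (fun x => Cplus (f x) (g x));
  nsf_memZ : forall (a : C) f, nsf_mem f -> nsf_mem (fun x => Cmult a (f x));
  nsf_norm_ge0 : forall f, nsf_mem f -> (0 <= nsf_norm f)%R;
  nsf_norm_eq0 : forall f, nsf_mem f -> nsf_norm f = 0%R -> forall x, f x = RtoC 0;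
  nsf_normZ : forall (a : C) f, nsf_mem f ->
      nsf_norm (fun x => Cmult a (f x)) = (Cmod a * nsf_norm f)%R;
  nsf_normD : forall f g, nsf_mem f -> nsf_mem g ->
      (nsf_norm (fun x => Cplus (f x) (g x)) <= nsf_norm f + nsf_norm g)%R;
  nsf_eval_bounded : forall x : X, exists c : R,
      forall f, nsf_mem f -> (Cmod (f x) <= c * nsf_norm f)%R
}.

Definition nsf_sub X (F : NSF X) (Y : X -> Prop) (f : X -> C) : Prop :=
  nsf_mem F f /\ forall x, ~ Y x -> f x = RtoC 0.

(* T : F -> E bounded linear operator (given as a map on functions, whose
   behaviour outside F is irrelevant). *)
Definition bounded_linear X (F E : NSF X) (T : (X -> C) -> (X -> C)) : Prop :=
  (forall f, nsf_mem F f -> nsf_mem E (T f)) /\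
  (forall f g, nsf_mem F f -> nsf_mem F g ->
     T (fun x => Cplus (f x) (g x)) = (fun x => Cplus (T f x) (T g x))) /\
  (forall (a : C) f, nsf_mem F f ->
     T (fun x => Cmult a (f x)) = (fun x => Cmult a (T f x))) /\
  (exists M : R, forall f, nsf_mem F f -> (nsf_norm E (T f) <= M * nsf_norm F f)%R).

Definition pt_eval X (x : X) : (X -> C) -> C := fun f => f x.

Definition adjoint X (T : (X -> C) -> (X -> C)) (phi : (X -> C) -> C) : (X -> C) -> C :=
  fun f => phi (T f).

(* Main.v *)
Require Import Defs.
From Stdlib Require Import Reals.
From Coquelicot Require Import Coquelicot.
From Stdlib Require Import Classical ClassicalChoice FunctionalExtensionality.

Lemma Caux : forall a b c d : C, b <> RtoC 0 -> Cplus c (Cmult (Copp (Cdiv a b)) d) = RtoC 0 ->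
  c = Cmult (Cdiv d b) a.
Proof.
intros a b c d Hb H. Local Open Scope C_scope.
assert (c = a / b * d). { replace c with (c + (- (a/b))*d + a/b*d) by ring. rewrite H. ring. }
rewrite H0. field. auto. Local Close Scope C_scope.
Qed.

Lemma Caux2 : forall a b : C, b <> RtoC 0 -> Cplus a (Cmult (Copp (Cdiv a b)) b) = RtoC 0.
Proof. intros a b Hb. Local Open Scope C_scope. field. auto. Local Close Scope C_scope. Qed.

Theorem proposition2p4 (X : Type) (F E : NSF X) (T : (X -> C) -> (X -> C))
  (hT : bounded_linear F E T) :
  let P1 := exists w : X -> C, forall f, nsf_mem F f -> T f = (fun x => Cmult (w x) (f x)) in
  let P2 := forall (Y : X -> Prop) f, nsf_sub F Y f -> nsf_sub E Y (T f) in
  let P3 := forall (x : X) f, nsf_sub F (fun y => y <> x) f ->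
              nsf_sub E (fun y => y <> x) (T f) in
  let P4 := forall x : X, exists c : C, forall f, nsf_mem F f ->
              adjoint T (pt_eval x) f = Cmult c (pt_eval x f) in
  (P1 <-> P2) /\ (P2 <-> P3) /\ (P3 <-> P4).
Proof.
  destruct hT as [Hmem [Hadd [Hscal _]]].
  intros P1 P2 P3 P4.
  assert (H12 : P1 -> P2).
  { intros [w Hw] Y f [Hf Hz]. split. apply Hmem; auto.
    intros x Hx. rewrite (Hw f Hf). rewrite (Hz x Hx). apply Cmult_0_r. }
  assert (H23 : P2 -> P3).
  { intros H x f Hf. apply H; auto. }
  assert (H34 : P3 -> P4).
  { intros H x. unfold adjoint, pt_eval.
    destruct (classic (exists g, nsf_mem F g /\ g x <> RtoC 0)) as [[g [Hg Hgx]] | Hn].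
    - exists (Cdiv (T g x) (g x)). intros f Hf.
      pose (k := fun y => Cmult (Copp (Cdiv (f x) (g x))) (g y)).
      assert (Hk : nsf_mem F k) by (apply nsf_memZ; auto).
      assert (Hh : nsf_sub F (fun y => y <> x) (fun y => Cplus (f y) (k y))).
      { split. apply nsf_memD; auto.
        intros y Hy. apply NNPP in Hy. subst y. unfold k.
        apply Caux2; auto. }
      destruct (H x _ Hh) as [_ Hz].
      specialize (Hz x (fun C => C eq_refl)).
      rewrite (Hadd f k Hf Hk) in Hz. unfold k in Hz. rewrite (Hscal _ g Hg) in Hz.
      apply (Caux (f x) (g x)); auto.
    - exists (RtoC 0). intros f Hf.
      assert (Hfx : f x = RtoC 0).
      { apply NNPP. intro Hne. apply Hn. exists f. auto. }
      assert (Hs : nsf_sub F (fun y => y <> x) f).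
      { split; auto. intros y Hy. apply NNPP in Hy. subst y. auto. }
      destruct (H x f Hs) as [_ Hz]. rewrite (Hz x). rewrite Hfx. symmetry. apply Cmult_0_r.
      intro C; apply C; reflexivity. }
  assert (H41 : P4 -> P1).
  { intros H. destruct (choice _ H) as [w Hw]. exists w. intros f Hf.
    apply functional_extensionality. intros x. apply (Hw x f Hf). }
  tauto.
Qed.
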